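(* Let $P$ be the uniform probability measure on $[0,1]$ and $Q$ a probability measure on $[0,1]$ with density $q$, so $r = dQ/dP = q$. Assume $r$ is unimodal with maximiser $x^*$ and $r_{max} = r(x^* ) = \sup r < \infty$. Then the width function $w$ is non-increasing in $\gamma$ and satisfies $$\int_0^1 w(\gamma)\,d\gamma = \frac{1}{r_{max}} \quad\text{and}\quad w(0) \ge \frac{1}{r_{max}}.$$
   Context: Unimodal: $r$ non-decreasing on $[0,x^*]$ and non-increasing on $[x^*,1]$. For $\gamma\in[0,1]$, the superlevel set is $S(\gamma) = \{x\in[0,1] : r(x) \ge \gamma r_{max}\}$ and the width function is $w(\gamma) = \inf\{\delta\in[0,1] : \exists z\in[0,1],\ S(\gamma)\subseteq[z,z+\delta]\}$. *)

(* Defs.v *)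
From HB Require Import structures.
From mathcomp Require Import all_boot all_order all_algebra.
From mathcomp Require Import all_classical all_reals all_analysis.
Set Implicit Arguments. Unset Strict Implicit. Unset Printing Implicit Defensive.
Import Order.TTheory GRing.Theory Num.Theory.
Local Open Scope classical_set_scope.
Local Open Scope ring_scope.

Definition superlevel (R : realType) (r : R -> R) (rmax gamma : R) : set R :=
  [set x | 0 <= x <= 1 /\ gamma * rmax <= r x].

Definition width (R : realType) (r : R -> R) (rmax gamma : R) : R :=
  inf [set delta : R | 0 <= delta <= 1 /\
        exists z : R, 0 <= z <= 1 /\ superlevel r rmax gamma `<=` `[z, z + delta]].

(* Main.v *)
Require Import Defs.
From HB Require Import structures.
From mathcomp Require Import all_boot all_order all_algebra.
From mathcomp Require Import all_classical all_reals all_analysis.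
From mathcomp Require Import lra.
From mathcomp Require Import measurable_realfun.
Import Order.TTheory GRing.Theory Num.Theory.
Local Open Scope classical_set_scope.
Local Open Scope ring_scope.

Lemma inf_D (R : realType) (S : set R) :
  S `<=` [set x | 0 <= x <= 1] -> S !=set0 ->
  inf [set delta : R | 0 <= delta <= 1 /\
        exists z : R, 0 <= z <= 1 /\ S `<=` `[z, z + delta]] = sup S - inf S.
Proof.
move=> S01 [s Ss].
have lbS : has_lbound S by exists 0 => x /S01 /andP[].
have ubS : has_ubound S by exists 1 => x /S01 /andP[].
have infS := ge_inf lbS; have supS := ub_le_sup ubS.
have i0 : 0 <= inf S by apply: lb_le_inf; [exists s|move=> x /S01 /andP[]].
have s1 : sup S <= 1 by apply: ge_sup; [exists s|move=> x /S01 /andP[]].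
have is_ : inf S <= s := infS _ Ss.
have ss : s <= sup S := supS _ Ss.
apply/eqP; rewrite eq_le; apply/andP; split.
- apply: ge_inf; first by exists 0 => d [/andP[]].
  split; first by apply/andP; split; lra.
  exists (inf S); split; first by apply/andP; split; lra.
  move=> x Sx; rewrite /= in_itv /=; apply/andP; split; first exact: infS.
  by rewrite addrC subrK; exact: supS.
- apply: lb_le_inf.
    exists 1; split; first by apply/andP; split.
    by exists 0; split; [apply/andP; split|move=> x /S01 xx; rewrite /= in_itv /= add0r].
  move=> d [_ [z [_ Sz]]].
  have zi : z <= inf S.
    apply: lb_le_inf; first by exists s.
    by move=> x /Sz; rewrite /= in_itv /= => /andP[].
  have sz : sup S <= z + d.
    apply: ge_sup; first by exists s.
    by move=> x /Sz; rewrite /= in_itv /= => /andP[].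
  lra.
Qed.
Lemma meas_convex (R : realType) (S : set R) :
  measurable S -> S `<=` [set x | 0 <= x <= 1] -> S !=set0 ->
  (forall a b c, S a -> S b -> a <= c -> c <= b -> S c) ->
  lebesgue_measure S = (sup S - inf S)%:E.
Proof.
move=> mS S01 [s Ss] cvx.
have lbS : has_lbound S by exists 0 => x /S01 /andP[].
have ubS : has_ubound S by exists 1 => x /S01 /andP[].
have infS := ge_inf lbS; have supS := ub_le_sup ubS.
have is_ : inf S <= s := infS _ Ss.
have ss : s <= sup S := supS _ Ss.
have sub1 : S `<=` `[inf S, sup S].
  by move=> x Sx; rewrite /= in_itv /= infS // supS.
have up : (lebesgue_measure S <= (sup S - inf S)%:E)%E.
  apply: (@le_trans _ _ (lebesgue_measure (`[inf S, sup S] : set R))).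
    by apply: le_measure => //; rewrite inE.
  rewrite lebesgue_measure_itv /= lte_fin.
  case: ltgtP => //; [move=> h; exfalso; lra| by move=> ->; rewrite subrr].
apply/eqP; rewrite eq_le up /=.
case: (ltP (inf S) (sup S)) => ab; last first.
  have -> : sup S - inf S = 0 by lra.
  exact: measure_ge0.
have sub2 : (`]inf S, sup S[ : set R) `<=` S.
  move=> c; rewrite /= in_itv /= => /andP[ac cb].
  have [s1 [Ss1 s1c]] : exists s1, S s1 /\ s1 <= c.
    apply: contrapT => H.
    have : c <= inf S.
      apply: lb_le_inf; first by exists s.
      move=> x Sx; rewrite leNgt; apply/negP => xc; apply: H; exists x.
      by split => //; exact: ltW.
    lra.
  have [s2 [Ss2 s2c]] : exists s2, S s2 /\ c <= s2.
    apply: contrapT => H.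
    have : sup S <= c.
      apply: ge_sup; first by exists s.
      move=> x Sx; rewrite leNgt; apply/negP => xc; apply: H; exists x.
      by split => //; exact: ltW.
    lra.
  exact: (cvx s1 s2).
rewrite -[leLHS](_ : lebesgue_measure (`]inf S, sup S[ : set R) = _); last first.
  by rewrite lebesgue_measure_itv /= lte_fin ab.
by apply: le_measure => //; rewrite inE.
Qed.
Lemma fub (R : realType) (A : set (R * R)) : measurable A ->
  (\int[lebesgue_measure]_x lebesgue_measure (xsection A x) =
   \int[lebesgue_measure]_y lebesgue_measure (ysection A y))%E.
Proof.
move=> mA.
have := indic_fubini_tonelli lebesgue_measure lebesgue_measure mA.
by rewrite indic_fubini_tonelli_FE // indic_fubini_tonelli_GE.
Qed.

Theorem mainTheorem3 (R : realType) (r : R -> R) (xstar : R)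
  (r_meas : measurable_fun (`[0%R, 1%R] : set R) r)
  (r_ge0 : forall x, 0 <= x <= 1 -> 0 <= r x)
  (r_int1 : (\int[lebesgue_measure]_(x in (`[0%R, 1%R] : set R)) (r x)%:E = 1)%E)
  (xstar01 : 0 <= xstar <= 1)
  (r_incr : forall x y, 0 <= x -> x <= y -> y <= xstar -> r x <= r y)
  (r_decr : forall x y, xstar <= x -> x <= y -> y <= 1 -> r y <= r x) :
  let rmax := r xstar in
  (forall g1 g2, 0 <= g1 -> g1 <= g2 -> g2 <= 1 ->
      width r rmax g2 <= width r rmax g1) /\
  (\int[lebesgue_measure]_(g in (`[0%R, 1%R] : set R)) (width r rmax g)%:E = (rmax^-1)%:E)%E /\
  rmax^-1 <= width r rmax 0.
Proof.
move=> rmax.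
have [x0 x1] := andP xstar01.
have rle : forall x, 0 <= x <= 1 -> r x <= rmax.
  move=> x /andP[x0' x1']; case: (leP x xstar) => h.
    exact: r_incr.
  by apply: r_decr => //; exact: ltW.
have m01 : measurable (`[0%R, 1%R] : set R) by exact: measurable_itv.
have rmax1 : 1 <= rmax.
  rewrite -lee_fin -r_int1.
  have -> : (rmax%:E = \int[lebesgue_measure]_(x in (`[0%R, 1%R] : set R)) (fun _ => rmax%:E) x)%E.
    rewrite integral_cst //.
    rewrite [X in (_ * X)%E](_ : _ = 1%E) ?mule1 //.
    have := @lebesgue_measure_itv R `[0%R, 1%R]; rewrite /= lte_fin ltr01 oppr0 adde0; exact.
  apply: ge0_le_integral => //.
  exact/measurable_EFinP.
have rpos : 0 < rmax by lra.
have rinv1 : rmax^-1 <= 1 by rewrite invf_le1.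
have rinv0 : 0 <= rmax^-1 by rewrite invr_ge0 ltW.
pose S g := superlevel r rmax g.
have S01 g : S g `<=` [set x | 0 <= x <= 1] by move=> x [].
have Sconv g : forall a b c, S g a -> S g b -> a <= c -> c <= b -> S g c.
  move=> a b c [/andP[a0 a1] ra] [/andP[b0 b1] rb] ac cb.
  split; first by apply/andP; split; lra.
  case: (leP c xstar) => h.
    by apply: le_trans ra _; apply: r_incr.
  by apply: le_trans rb _; apply: r_decr => //; exact: ltW.
have Smeas g : measurable (S g).
  have -> : S g = `[0%R, 1%R] `&` r @^-1` `[g * rmax, +oo[.
    apply/seteqP; split => x /=.
      by move=> [x01 h]; rewrite !in_itv /= x01 h.
    by rewrite !in_itv /= andbT => -[].
  by apply: r_meas => //; exact: measurable_itv.
have Sx g : 0 <= g <= 1 -> S g xstar.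
  move=> /andP[g0 g1]; split; first by apply/andP; split.
  rewrite -/rmax; nra.
have wE g : 0 <= g <= 1 -> (width r rmax g)%:E = lebesgue_measure (S g).
  move=> g01; rewrite /width (@inf_D R _ (S01 g)); last by exists xstar; exact: Sx.
  by rewrite meas_convex //; [exists xstar; exact: Sx|exact: Sconv].
have D0 g : [set delta : R | 0 <= delta <= 1 /\
        exists z : R, 0 <= z <= 1 /\ superlevel r rmax g `<=` `[z, z + delta]] !=set0.
  exists 1; split; first by apply/andP; split.
  exists 0; split; first by apply/andP; split.
  by move=> x [/andP[? ?] _]; rewrite /= in_itv /= add0r; apply/andP; split.
split.
  move=> g1 g2 g10 g12 g21; rewrite /width.
  apply: lb_le_inf; first exact: D0.
  move=> d [d01 [z [z01 sub]]].
  apply: ge_inf; first by exists 0 => e [/andP[]].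
  split => //; exists z; split => //.
  move=> x [x01 hx]; apply: sub; split => //.
  apply: le_trans hx; rewrite ler_wpM2r //; lra.
split; last first.
  rewrite /width; apply: lb_le_inf; first exact: D0.
  move=> d [_ [z [_ sub]]].
  have /sub : superlevel r rmax 0 0 by split; [apply/andP; split|rewrite mul0r r_ge0 //; apply/andP; split].
  have /sub : superlevel r rmax 0 1 by split; [apply/andP; split|rewrite mul0r r_ge0 //; apply/andP; split].
  rewrite /= !in_itv /= => /andP[_ h1] /andP[h0 _].
  lra.
pose A := [set z : R * R | (0 <= z.1 <= 1) /\ (0 <= z.2 <= 1) /\ z.2 * rmax <= r z.1].
have mA : measurable A.
  pose h := fun z : R * R => r z.1 - z.2 * rmax.
  have mh : measurable_fun (`[0%R, 1%R] `*` `[0%R, 1%R] : set (R * R)) h.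
    apply: measurable_funB.
      apply: (measurable_comp m01 _ r_meas).
        by move=> _ [z [z1 _] <-].
      exact: (measurable_funS measurableT (@subsetT _ _) measurable_fst).
    apply: measurable_funM.
      exact: (measurable_funS measurableT (@subsetT _ _) measurable_snd).
    exact: measurable_cst.
  have -> : A = (`[0%R, 1%R] `*` `[0%R, 1%R] : set (R * R)) `&` h @^-1` (`[0%R, +oo[ : set R).
    apply/seteqP; split => z /=.
      move=> [z1 [z2 hz]]; rewrite !in_itv /= z1 z2 andbT /h subr_ge0; split => //.
    by rewrite !in_itv /= andbT /h subr_ge0 => -[[z1 z2] hz].
  by apply: mh; [exact: measurableX|exact: measurable_itv].
have := @fub R A mA.
have -> : (\int[lebesgue_measure]_x lebesgue_measure (xsection A x) = (rmax^-1)%:E)%E.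
  rewrite -[(rmax^-1)%:E]mule1 -r_int1 -ge0_integralZl_EFin //; last first.
    exact/measurable_EFinP.
  rewrite [RHS]integral_mkcond; apply: eq_integral => x _; rewrite patchE.
  case: ifPn => hx.
    have x01 : 0 <= x <= 1 by move: hx; rewrite inE /= in_itv.
    have rx0 := r_ge0 _ x01.
    have rx1 := rle _ x01.
    have -> : xsection A x = [set` `[0%R, r x / rmax]].
      apply/seteqP; split => y; rewrite /xsection /= inE /= in_itv /=.
        by move=> [_ [/andP[y0 _] hy]]; rewrite y0 ler_pdivlMr.
      move=> /andP[y0]; rewrite ler_pdivlMr // => hy; split => //; split => //.
      by apply/andP; split => //=; nra.
    have := @lebesgue_measure_itv R `[0%R, r x / rmax]; rewrite /= => ->.
    rewrite lte_fin; case: ltgtP => h.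
    - by rewrite -EFinD oppr0 addr0 -EFinM mulrC.
    - by exfalso; move: h; rewrite ltNge divr_ge0 // ltW.
    - have -> : r x = 0 by move: h => /esym /eqP; rewrite mulf_eq0 invr_eq0 (gt_eqF rpos) orbF => /eqP.
      by rewrite mule0.
  have -> : xsection A x = set0.
    apply/seteqP; split => y; rewrite /xsection /= inE /= => //.
    by move=> [x01 _]; apply: (negP hx); rewrite inE /= in_itv /=; move: x01.
  by rewrite measure0.
move=> ->; rewrite integral_mkcond; apply: eq_integral => y _; rewrite patchE.
case: ifPn => hy.
  have y01 : 0 <= y <= 1 by move: hy; rewrite inE /= in_itv.
  rewrite wE //; congr (lebesgue_measure _).
  apply/seteqP; split => x; rewrite /ysection /= inE /=.
    by move=> [x01 h]; split.
  by move=> [x01 [_ h]]; split.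
have -> : ysection A y = set0.
  apply/seteqP; split => x; rewrite /ysection /= inE /= => //.
  by move=> [_ [y01 _]]; apply: (negP hy); rewrite inE /= in_itv /=; move: y01.
by rewrite measure0.
Qed.
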